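(* Let $n\ge 1$, let $K=\mathbb{R}^n_+=\{x\in\mathbb{R}^n: x_i\ge 0,\ i=1,\dots,n\}$, and let $\bar x\in K\cap\mathbb{Z}^n$. Then the recession cone of $Q(\bar x)$ is $K$, and $Q(\bar x)$ is a full-dimensional polyhedron. Moreover, if $\bar x\neq 0$ and $\ell:=\ell(\bar x)$, then the extreme points of $Q(\bar x)$ are precisely the points $v^1,\dots,v^{\ell}$, where $v^{\ell}=\bar x$ and, for $k=1,\dots,\ell-1$, $v^k$ is the point with entries $v^k_i=\bar x_i$ for $i=1,\dots,k-1$, $v^k_k=\bar x_k+1$, and $v^k_i=0$ for $i=k+1,\dots,n$.
   Context: The lexicographic order on $\mathbb{R}^n$ (associated with the standard basis): for $x,y\in\mathbb{R}^n$, $x\prec y$ iff $x\neq y$ and $x_i<y_i$, where $i$ is the smallest index with $x_i\neq y_i$; $\preceq,\succ,\succeq$ have the obvious meaning. For $\bar x\in K\cap\mathbb{Z}^n$, $Q(\bar x):=\operatorname{conv}\{x\in K\cap\mathbb{Z}^n: x\succeq\bar x\}$. For $\bar x\in K\setminus\{0\}$, the leading index $\ell(\bar x)$ is the largest index $i$ with $\bar x_i>0$. *)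

(* Defs.v *)
(* R : realType, points of R^n are row vectors 'rV[R]_n,
   coordinate i (0-based, i : 'I_n) of x is x ord0 i. Sets are classical sets. *)
From HB Require Import structures.
From mathcomp Require Import all_boot all_order all_algebra.
From mathcomp Require Import boolp classical_sets reals.
Set Implicit Arguments. Unset Strict Implicit. Unset Printing Implicit Defensive.
Import Order.TTheory GRing.Theory Num.Theory.
Local Open Scope ring_scope.
Local Open Scope classical_set_scope.

Section Defs.
Variables (R : realType) (n : nat).
Local Notation vec := 'rV[R]_n.

Definition Kplus : set vec := [set x | forall i : 'I_n, 0 <= x ord0 i].

Definition integral_pt (x : vec) : Prop :=
  forall i : 'I_n, exists z : int, x ord0 i = z%:~R.

Definition lex_lt (x y : vec) : Prop :=
  exists i : 'I_n, x ord0 i < y ord0 i /\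
    forall j : 'I_n, (j < i)%N -> x ord0 j = y ord0 j.
Definition lex_le (x y : vec) : Prop := x = y \/ lex_lt x y.

Definition conv (S : set vec) : set vec :=
  [set x | exists (m : nat) (w : 'I_m -> R) (p : 'I_m -> vec),
     (forall k, 0 <= w k) /\ \sum_(k < m) w k = 1 /\
     (forall k, S (p k)) /\ x = \sum_(k < m) w k *: p k].

Definition Q (xbar : vec) : set vec :=
  conv [set x | Kplus x /\ integral_pt x /\ lex_le xbar x].

Definition rec_cone (C : set vec) : set vec :=
  [set d | forall x, C x -> forall t : R, 0 <= t -> C (x + t *: d)].

Definition polyhedron (P : set vec) : Prop :=
  exists (m : nat) (a : 'I_m -> vec) (b : 'I_m -> R),
    P = [set x | forall k, \sum_(i < n) a k ord0 i * x ord0 i <= b k].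

(* full-dimensional: P contains n+1 affinely independent points x0, x0 + M_i
   (i.e. its affine hull has dimension n) *)
Definition full_dim (P : set vec) : Prop :=
  exists (x0 : vec) (M : 'M[R]_n),
    P x0 /\ (forall i : 'I_n, P (x0 + row i M)) /\ \rank M = n.

Definition extreme_points (C : set vec) : set vec :=
  [set x | C x /\ forall (y z : vec) (t : R), C y -> C z -> 0 < t -> t < 1 ->
      x = t *: y + (1 - t) *: z -> y = z].

Definition is_leading_index (x : vec) (l : 'I_n) : Prop :=
  0 < x ord0 l /\ forall j : 'I_n, (l < j)%N -> ~ (0 < x ord0 j).

(* the points v^k (0-based k): v^l = xbar, and for k < l,
   v^k_i = xbar_i (i < k), v^k_k = xbar_k + 1, v^k_i = 0 (i > k) *)
Definition vpt (xbar : vec) (l k : 'I_n) : vec :=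
  if k == l then xbar
  else \row_(i < n) (if (i < k)%N then xbar ord0 i
                     else if i == k then xbar ord0 k + 1 else 0).

End Defs.

(* Main.v *)
Require Import Defs.
From HB Require Import structures.
From mathcomp Require Import all_boot all_order all_algebra.
From mathcomp Require Import boolp classical_sets reals.
From mathcomp Require Import zify ring lra.
Set Implicit Arguments. Unset Strict Implicit. Unset Printing Implicit Defensive.
Import Order.TTheory GRing.Theory Num.Theory.
Local Open Scope ring_scope.
Local Open Scope classical_set_scope.

Section Conv.
Variables (R : realType) (n : nat).
Implicit Types (S : set 'rV[R]_n).

Lemma conv_pt S p : S p -> conv S p.
Proof.
move=> Sp; exists 1%N, (fun _ => 1), (fun _ => p); split => //.
by rewrite big_ord1; split => //; split => //; rewrite big_ord1 scale1r.
Qed.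

Lemma conv_comb S y z t : conv S y -> conv S z -> 0 <= t <= 1 ->
  conv S (t *: y + (1 - t) *: z).
Proof.
move=> [m1 [w1 [p1 [w1p [w1s [p1S ->]]]]]] [m2 [w2 [p2 [w2p [w2s [p2S ->]]]]]].
move=> /andP[t0 t1].
exists (m1 + m2)%N, (fun k => match split k with inl i => t * w1 i | inr j => (1 - t) * w2 j end),
  (fun k => match split k with inl i => p1 i | inr j => p2 j end).
have hl (i : 'I_m1) : split (lshift m2 i) = inl i := unsplitK (inl _ i).
have hr (i : 'I_m2) : split (rshift m1 i) = inr i := unsplitK (inr _ i).
split; first by move=> k; case: split => i; apply: mulr_ge0 => //; rewrite subr_ge0.
split.
  rewrite big_split_ord /= (eq_bigr (fun i => t * w1 i)); last by move=> i _; rewrite /= hl.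
  rewrite (eq_bigr (fun i => (1 - t) * w2 i)); last by move=> i _; rewrite /= hr.
  by rewrite -!mulr_sumr w1s w2s !mulr1 addrC subrK.
split; first by move=> k; case: split.
rewrite [RHS]big_split_ord /= !scaler_sumr; congr (_ + _); apply: eq_bigr => i _.
  by rewrite hl scalerA.
by rewrite hr scalerA.
Qed.

Lemma conv_shift S c y : (forall p, S p -> S (p + c)) -> conv S y -> conv S (y + c).
Proof.
move=> Sc [m [w [p [wp [ws [pS ->]]]]]].
exists m, w, (fun k => p k + c); split => //; split => //; split; first by move=> k; apply: Sc.
rewrite [RHS](eq_bigr (fun k => w k *: p k + w k *: c)); last by move=> k _; rewrite scalerDr.
by rewrite big_split /= -scaler_suml ws scale1r.
Qed.

Lemma conv_up1 S y c (i : 'I_n) :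
  (forall p (N : nat), S p -> S (p + N%:R *: 'e_i)) -> conv S y -> 0 <= c ->
  conv S (y + c *: 'e_i).
Proof.
move=> SN Sy c0.
set N := Num.Def.archi_bound c.
have cN : c < N%:R by apply: archi_boundP.
have N0 : 0 < N%:R :> R by apply: le_lt_trans cN.
have := @conv_comb S (y + N%:R *: 'e_i) y (c / N%:R) (conv_shift (SN ^~ N) Sy) Sy.
have -> : c / N%:R *: (y + N%:R *: 'e_i) + (1 - c / N%:R) *: y = y + c *: 'e_i.
  rewrite scalerDr scalerA mulfVK ?gt_eqF // scalerBl scale1r; by rewrite addrC addrA subrK addrC.
apply; rewrite divr_ge0 ?ler_pdivrMr ?mul1r ?(ltW N0) ?(ltW cN) //.
Qed.

Lemma conv_up S y r :
  (forall p (N : nat) (i : 'I_n), S p -> S (p + N%:R *: 'e_i)) -> conv S y -> Kplus r ->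
  conv S (y + r).
Proof.
move=> SN Sy r0; rewrite (row_sum_delta r).
pose P (v : 'rV[R]_n) := forall y, conv S y -> conv S (y + v).
suff : P (\sum_(j < n) r 0 j *: 'e_j) by apply.
apply: big_ind => [y' ?|u v Pu Pv y' ?|j _ y' ?]; first by rewrite addr0.
  by rewrite addrA; apply: Pv; apply: Pu.
apply: conv_up1 => //; by move=> p N; apply: SN.
Qed.

End Conv.
Section Main.
Variables (R : realType) (n : nat) (xbar : 'rV[R]_n.+1).
Hypothesis hK : Kplus xbar.
Hypothesis hZ : integral_pt xbar.
Local Notation N := n.+1.
Local Notation vec := 'rV[R]_N.

Definition a (i : nat) : R := xbar ord0 (inord i).
Definition co (x : vec) (i : nat) : R := x ord0 (inord i).

Lemma a_ge0 i : 0 <= a i.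
Proof. exact: hK. Qed.

Definition W (m i : nat) : R :=
  if i == m then 1 else if (i < m)%N then a m * \prod_(i.+1 <= k < m) (1 + a k) else 0.

Lemma W_ge0 m i : 0 <= W m i.
Proof.
rewrite /W; case: eqP => // _; case: ltnP => // _.
by apply: mulr_ge0; [apply: a_ge0 | apply: prodr_ge0 => k _; apply: addr_ge0 => //; apply: a_ge0].
Qed.

Lemma W_gt0 m i : 0 < a m -> (i <= m)%N -> 0 < W m i.
Proof.
move=> am im; rewrite /W; case: eqP => // /eqP ne.
rewrite ltn_neqAle ne im /=.
apply: mulr_gt0 => //; apply: prodr_gt0 => k _; apply: ltr_wpDr; [apply: a_ge0|exact: ltr01].
Qed.

Lemma W_id j m : (j < m)%N -> W m j = \sum_(j.+1 <= i < m.+1) W m i * a i.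
Proof.
move=> jm; have [d hd] : exists d, (m - j.+1)%N = d by eexists.
elim: d j jm hd => [|d IH] j jm hd.
  have mj : m = j.+1 by lia.
  by rewrite mj big_nat1 /W big_geq // eqxx ltnSn (ltn_eqF (ltnSn j)) mul1r mulr1.
have jm' : (j.+1 < m)%N by lia.
rewrite big_ltn ?ltnS // -(IH j.+1 jm'); last by lia.
by rewrite /W (ltn_eqF jm) (ltn_eqF jm') jm jm' (big_ltn jm'); ring.
Qed.

Lemma W_big j m : (j <= m)%N -> \sum_(j.+1 <= i < m.+1) W m i * a i <= W m j.
Proof.
rewrite leq_eqVlt => /orP[/eqP ->|jm]; last by rewrite W_id.
by rewrite big_geq // /W eqxx ler01.
Qed.

Lemma W_out m i : (m < i)%N -> W m i = 0.
Proof. by move=> mi; rewrite /W ifN_eq ?neq_ltn ?mi ?orbT // ltnNge ltnW. Qed.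


Definition L (m : nat) (x : vec) : R := \sum_(0 <= i < m.+1) W m i * (co x i - a i).
Definition Hs : set vec := [set x | Kplus x /\ forall m, (m < N)%N -> 0 <= L m x].
Definition Sx : set vec := [set x | Kplus x /\ integral_pt x /\ lex_le xbar x].

Lemma coE (x : vec) (i : 'I_N) : co x i = x ord0 i.
Proof. by rewrite /co inord_val. Qed.

Lemma co_ge0 x i : Kplus x -> 0 <= co x i.
Proof. by move=> hx; apply: hx. Qed.

Lemma L_prefix m y : (forall i, (i < m)%N -> co y i = a i) -> L m y = co y m - a m.
Proof.
move=> h; rewrite /L big_nat_recr //= big_nat_cond big1 ?add0r.
  by rewrite /W eqxx mul1r.
by move=> i /andP[/andP[_ im] _]; rewrite h // subrr mulr0.
Qed.

Lemma L_zero m x : (forall i, (i <= m)%N -> co x i = a i) -> L m x = 0.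
Proof.
move=> h; rewrite /L big_nat_cond big1 //.
by move=> i /andP[/andP[_ im] _]; rewrite h // subrr mulr0.
Qed.

Lemma L_lower j m x : (j <= m)%N -> (forall i, (i < j)%N -> co x i = a i) ->
  a j + 1 <= co x j -> Kplus x -> 0 <= L m x.
Proof.
move=> jm hpre hj hx.
rewrite /L (@big_cat_nat _ _ _ j) ?(leqW jm) //= big_nat_cond big1 ?add0r; last first.
  by move=> i /andP[/andP[_ im] _]; rewrite hpre // subrr mulr0.
rewrite big_ltn ?ltnS //.
have s1 : - \sum_(j.+1 <= i < m.+1) W m i * a i <= \sum_(j.+1 <= i < m.+1) W m i * (co x i - a i).
  rewrite -sumrN; apply: ler_sum => i _; rewrite -mulrN; apply: ler_wpM2l; first exact: W_ge0.
  have := co_ge0 i hx; lra.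
have s2 : W m j <= W m j * (co x j - a j).
  rewrite -{1}(mulr1 (W m j)); apply: ler_wpM2l; [exact: W_ge0 | lra].
have := W_big jm; lra.
Qed.

Lemma L_comb m y z t : L m (t *: y + (1 - t) *: z) = t * L m y + (1 - t) * L m z.
Proof.
rewrite /L !mulr_sumr -big_split /=; apply: eq_bigr => i _; rewrite /co !mxE; ring.
Qed.

Lemma int_step (u v : R) : (exists z : int, u = z%:~R) -> (exists z : int, v = z%:~R) ->
  u < v -> u + 1 <= v.
Proof.
move=> [z1 ->] [z2 ->]; rewrite ltr_int => h.
have : (z1 + 1 <= z2)%R by rewrite lezD1.
by rewrite -(ler_int R) intrD.
Qed.

Lemma S_H p : Sx p -> Hs p.
Proof.
move=> [hp [ip [<-|[j [ltj eqj]]]]]; split => // m mN.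
  by rewrite L_zero.
case: (leqP j m) => jm.
  apply: (L_lower jm) => //.
    move=> i ij; have iN : (i < N)%N by apply: ltn_trans ij (ltn_ord j).
    rewrite /co /a eqj // inordK //.
  by rewrite /a inord_val coE; apply: int_step => //; apply: hZ.
rewrite L_zero // => i im; have iN : (i < N)%N by apply: leq_ltn_trans im (ltn_trans jm (ltn_ord j)).
rewrite /co /a eqj // inordK //; by apply: leq_ltn_trans im jm.
Qed.

Lemma conv_H x : conv Sx x -> Hs x.
Proof.
move=> [k [w [p [w0 [ws [pS ->]]]]]].
have ce i : co (\sum_(l < k) w l *: p l) i - a i = \sum_(l < k) w l * (co (p l) i - a i).
  rewrite /co summxE; under [X in _ = X]eq_bigr do rewrite mulrBr.
  rewrite big_split /= sumrN -mulr_suml ws mul1r; congr (_ - _).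
  by apply: eq_bigr => l _; rewrite mxE.
split.
  move=> i; rewrite summxE; apply: sumr_ge0 => l _; rewrite mxE; apply: mulr_ge0 => //.
  by case: (pS l) => hp _; apply: hp.
move=> m mN; rewrite /L; under eq_bigr do rewrite ce mulr_sumr.
rewrite exchange_big /=; apply: sumr_ge0 => l _.
under eq_bigr do rewrite mulrCA; rewrite -mulr_sumr; apply: mulr_ge0 => //.
by case: (S_H (pS l)) => _; apply.
Qed.

Definition vk (k : 'I_N) : vec :=
  \row_(i < N) (if (i < k)%N then xbar ord0 i else if i == k then xbar ord0 k + 1 else 0).

Lemma isint_add1 (u : R) : (exists z : int, u = z%:~R) -> exists z : int, u + 1 = z%:~R.
Proof. by move=> [z ->]; exists (z + 1); rewrite intrD. Qed.

Lemma vk_S k : Sx (vk k).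
Proof.
split; [|split].
- move=> i; rewrite mxE; case: ifP => _; first exact: hK.
  case: ifP => _ //; apply: addr_ge0 => //; exact: hK.
- move=> i; rewrite mxE; case: ifP => _; first exact: hZ.
  case: ifP => _; last by exists 0.
  by apply: isint_add1; apply: hZ.
- right; exists k; rewrite mxE ltnn eqxx; split; first by rewrite ltrDl ltr01.
  by move=> j jk; rewrite mxE jk.
Qed.

Lemma xbar_S : Sx xbar.
Proof. by split => //; split => //; left. Qed.

Lemma ord_ltF m (j i : 'I_m) : (j < i)%N -> (j == i) = false.
Proof. by move=> h; apply/negbTE; rewrite -val_eqE /= neq_ltn h. Qed.

Lemma S_shift p (M : nat) (i : 'I_N) : Sx p -> Sx (p + M%:R *: 'e_i).
Proof.
move=> [hp [ip hl]].
have E j : (p + M%:R *: 'e_i) ord0 j = p ord0 j + (if j == i then M%:R else 0).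
  by rewrite !mxE eqxx /=; case: (j == i); rewrite ?mulr1 ?mulr0.
split; [|split].
- move=> j; rewrite E; apply: addr_ge0 => //; case: ifP => //.
- move=> j; rewrite E; case: (ip j) => z ->; case: ifP => _.
    by exists (z + M%:Z); rewrite intrD pmulrn.
  by exists z; rewrite addr0.
case: M E => [|M] E.
  by have -> : p + 0%:R *: 'e_i = p by rewrite scale0r addr0.
have M0 : 0 < M.+1%:R :> R by rewrite ltr0n.
case: hl => [e|[j [ltj eqj]]].
  subst p; right; exists i; rewrite E eqxx ltrDl; split => // j ji.
  by rewrite E (ord_ltF ji) addr0.
right; case: (ltnP i j) => ij.
  exists i; rewrite E eqxx eqj ?ltrDl //; split => // j' j'i.
  by rewrite E (ord_ltF j'i) addr0 eqj // (ltn_trans j'i ij).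
exists j; rewrite E; split.
  by apply: (lt_le_trans ltj); rewrite lerDl; case: ifP => // _; apply: ltW.
move=> j' j'j; rewrite E eqj // ifN ?addr0 //.
by apply/negP => /eqP ei; move: j'j; rewrite ei ltnNge ij.
Qed.

Lemma Q_up y r : Q xbar y -> Kplus r -> Q xbar (y + r).
Proof. move=> Qy Kr; apply: conv_up Qy Kr => p M i; exact: S_shift. Qed.

Lemma decomp x (k : 'I_N) : Hs x -> (forall i, (i < k)%N -> co x i = a i) ->
  co x k - a k < 1 ->
  exists z, [/\ Hs z, (forall i, (i <= k)%N -> co z i = a i) &
    x = (co x k - a k) *: vk k + (1 - (co x k - a k)) *: z].
Proof.
move=> [hx hL] hpre t1.
set t := co x k - a k in t1 *.
have t0 : 0 <= t by have := hL k (ltn_ord k); rewrite L_prefix.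
have t1' : 0 < 1 - t by lra.
pose z : vec := \row_(i < N) (if (i <= k)%N then xbar ord0 i else x ord0 i / (1 - t)).
have zlo i : (i <= k)%N -> co z i = a i.
  move=> ik; rewrite /co mxE inordK ?ik //; by apply: leq_ltn_trans ik (ltn_ord k).
have zhi i : (k < i)%N -> (i < N)%N -> co z i = co x i / (1 - t).
  by move=> ki iN; rewrite /co mxE inordK // leqNgt ki.
exists z; split => //.
- split.
    move=> i; rewrite mxE; case: ifP => _; first exact: hK.
    by apply: divr_ge0; [apply: hx | exact: ltW t1'].
  move=> m mN; case: (leqP m k) => km.
    by rewrite L_zero // => i im; apply: zlo; apply: leq_trans im km.
  have := hL m mN.
  rewrite /L (@big_cat_nat _ _ _ k) ?(leq_trans (leqnSn _) (leqW km)) //=.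
  rewrite [X in _ -> 0 <= X](@big_cat_nat _ _ _ k) ?(leq_trans (leqnSn _) (leqW km)) //=.
  rewrite big_nat_cond big1 ?add0r; last first.
    by move=> i /andP[/andP[_ im] _]; rewrite hpre ?subrr ?mulr0.
  rewrite [X in _ -> 0 <= X + _]big_nat_cond [X in _ -> 0 <= X + _]big1 ?add0r; last first.
    by move=> i /andP[/andP[_ im] _]; rewrite zlo ?subrr ?mulr0 // ltnW.
  have km1 : (k < m.+1)%N by apply: ltnW.
  rewrite !(big_ltn km1) zlo // subrr mulr0 add0r.
  rewrite -/t (W_id km).
  have e : (\sum_(k.+1 <= i < m.+1) W m i * (co z i - a i)) * (1 - t) =
    t * (\sum_(k.+1 <= i < m.+1) W m i * a i) + \sum_(k.+1 <= i < m.+1) W m i * (co x i - a i).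
    rewrite mulr_suml mulr_sumr -big_split /=; apply: eq_big_nat => i /andP[ki im].
    rewrite zhi //; last by apply: leq_ltn_trans mN; rewrite -ltnS.
    field; lra.
  rewrite mulrC -e => h.
  have -> : \sum_(k.+1 <= i < m.+1) W m i * (co z i - a i) =
    ((\sum_(k.+1 <= i < m.+1) W m i * (co z i - a i)) * (1 - t)) / (1 - t) by field; lra.
  by apply: divr_ge0 => //; apply: ltW.
- have o : (0 : 'I_1) = ord0 by apply/val_inj.
  apply/rowP => i; rewrite !mxE.
  case: (ltngtP i k) => ik.
  + by rewrite o -coE hpre // /a inord_val; ring.
  + by rewrite o eq_sym (ord_ltF ik); field; lra.
  + have -> : i = k by apply: val_inj.
    by rewrite eqxx o -coE /t /a inord_val; ring.
Qed.

Lemma t_ge0 x (k : nat) : Hs x -> (forall i, (i < k)%N -> co x i = a i) -> (k < N)%N ->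
  0 <= co x k - a k.
Proof. by move=> [_ hL] hpre kN; have := hL k kN; rewrite L_prefix. Qed.

Lemma o1 : (0 : 'I_1) = ord0.
Proof. by apply/val_inj. Qed.

Lemma up_vk x (k : 'I_N) : Hs x -> (forall i, (i < k)%N -> co x i = a i) ->
  1 <= co x k - a k -> Kplus (x - vk k).
Proof.
move=> [hx _] hpre t1 i; rewrite !mxE.
case: (ltngtP i k) => ik.
- by rewrite -(coE x) hpre // /a inord_val subrr.
- by rewrite eq_sym (ord_ltF ik) subr0; apply: hx.
- have -> : i = k by apply: val_inj.
  rewrite eqxx -(coE x); move: t1; rewrite /a inord_val; lra.
Qed.

Lemma H_Q x : Hs x -> Q xbar x.
Proof.
suff : forall d x, Hs x -> (forall i, (i < N - d)%N -> co x i = a i) -> Q xbar x.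
  by move=> h Hx; apply: (h N) => // i; rewrite subnn.
elim => [|d IH] {}x Hx hpre.
  have -> : x = xbar.
    by apply/rowP => i; rewrite o1 -coE hpre ?subn0 // /a inord_val.
  exact: conv_pt xbar_S.
case: (leqP N d) => dN.
  apply: IH => // i; have -> : (N - d)%N = 0%N by apply/eqP; rewrite subn_eq0.
  by [].
have kN : (N - d.+1 < N)%N by rewrite ltn_subrL.
pose k := Ordinal kN.
have hk : forall i, (i < k)%N -> co x i = a i by move=> i ik; apply: hpre.
case: (lerP 1 (co x k - a k)) => t1.
  have -> : x = vk k + (x - vk k) by rewrite addrC subrK.
  by apply: Q_up; [exact: conv_pt (vk_S k) | exact: up_vk].
have t0 := t_ge0 Hx hk kN.
have [z [Hz zlo ->]] := decomp Hx hk t1.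
apply: conv_comb; first exact: conv_pt (vk_S k).
  apply: IH => // i id; apply: zlo; rewrite /= -ltnS.
  by apply: leq_trans id _; rewrite subnSK.
by rewrite t0 /=; lra.
Qed.

Lemma Q_eq : Q xbar = Hs.
Proof. by rewrite eqEsubset; split => x; [apply: conv_H | apply: H_Q]. Qed.

Lemma H_up y r : Hs y -> Kplus r -> Hs (y + r).
Proof. by rewrite -Q_eq; apply: Q_up. Qed.

Lemma L_ord m x : (m < N)%N -> L m x = \sum_(i < N) W m i * (x ord0 i - xbar ord0 i).
Proof.
move=> mN.
rewrite (eq_bigr (fun i : 'I_N => W m i * (co x i - a i))); last first.
  by move=> i _; rewrite coE /a inord_val.
rewrite -(big_mkord xpredT (fun i => W m i * (co x i - a i))).
rewrite /L (@big_cat_nat _ _ _ m.+1 0 N) //= [X in _ = _ + X]big_nat_cond [X in _ = _ + X]big1 ?addr0 //.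
by move=> i /andP[/andP[mi _] _]; rewrite W_out // mul0r.
Qed.

Lemma nonext x p r : extreme_points Hs x -> Hs p -> Kplus r -> x = p + r -> x = p.
Proof.
move=> [Hx ext] Hp Kr e.
have K2 : Kplus (r + r) by move=> i; rewrite mxE; apply: addr_ge0; apply: Kr.
have h2 : 0 < 1 / 2 :> R by rewrite divr_gt0 ?ltr01 ?ltr0n.
have h2' : 1 / 2 < 1 :> R by rewrite ltr_pdivrMr ?ltr0n // mul1r ltr1n.
have := ext p (p + (r + r)) (1/2) Hp (H_up Hp K2) h2 h2'.
have ex : x = 1/2 *: p + (1 - 1/2) *: (p + (r + r)).
  by rewrite e; apply/rowP => i; rewrite !mxE; field.
move=> /(_ ex) hp.
have r0 : r = 0.
  apply/rowP => i; have := congr1 (fun v : vec => v ord0 i) hp => /=.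
  rewrite o1 !mxE; lra.
by rewrite e r0 addr0.
Qed.

Lemma zero2 (A B t : R) : 0 <= A -> 0 <= B -> 0 < t -> t < 1 -> t * A + (1 - t) * B = 0 -> A = 0.
Proof.
move=> A0 B0 t0 t1 e.
have h1 : 0 <= t * A by apply: mulr_ge0 => //; apply: ltW.
have h2 : 0 <= (1 - t) * B by apply: mulr_ge0 => //; lra.
have : t * A = 0 by lra.
by move/eqP; rewrite mulf_eq0 => /orP[/eqP t00|/eqP //]; move: t0; rewrite t00 ltxx.
Qed.

Lemma tight v y z t : Hs y -> Hs z -> 0 < t -> t < 1 -> v = t *: y + (1 - t) *: z ->
  (forall m, (m < N)%N -> L m v = 0 -> L m y = 0) /\
  (forall i : 'I_N, v ord0 i = 0 -> y ord0 i = 0).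
Proof.
move=> [Ky Ly] [Kz Lz] t0 t1 ->; split.
  move=> m mN; rewrite L_comb => h; exact: (zero2 (Ly m mN) (Lz m mN) t0 t1 h).
move=> i; rewrite !mxE => h; exact: (zero2 (Ky i) (Kz i) t0 t1 h).
Qed.

Lemma co_vk (k : 'I_N) i : (i < N)%N ->
  co (vk k) i = if (i < k)%N then a i else if i == k then a k + 1 else 0.
Proof.
move=> iN; rewrite /co mxE -val_eqE /= inordK // /a inord_val.
by case: ifP.
Qed.

Lemma L_split (k : 'I_N) m u : (k < m)%N -> (m < N)%N -> (forall i, (i < k)%N -> co u i = a i) ->
  (forall i, (k < i)%N -> (i <= m)%N -> co u i = 0) ->
  L m u = W m k * (co u k - a k) - \sum_(k.+1 <= i < m.+1) W m i * a i.
Proof.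
move=> km mN hlo hhi.
rewrite /L (@big_cat_nat _ _ _ k) ?(leq_trans (leqnSn _) (leqW km)) //=.
rewrite big_nat_cond big1 ?add0r; last first.
  by move=> i /andP[/andP[_ im] _]; rewrite hlo ?subrr ?mulr0.
have km1 : (k < m.+1)%N by apply: ltnW.
rewrite (big_ltn km1) -sumrN; congr (_ + _); apply: eq_big_nat => i /andP[ki im].
by rewrite hhi // sub0r mulrN.
Qed.

Variable l : 'I_N.
Hypothesis hl : is_leading_index xbar l.

Lemma a_hi i : (l < i)%N -> (i < N)%N -> a i = 0.
Proof.
move=> li iN; have := hl.2 (inord i); rewrite inordK // => /(_ li) h.
by apply/eqP; rewrite eq_le a_ge0 andbT leNgt; apply/negP.
Qed.

Lemma al_gt0 : 0 < a l.
Proof. by rewrite /a inord_val; exact: hl.1. Qed.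

Lemma vpt_lo (k : 'I_N) i : (i < k)%N -> co (vpt xbar l k) i = a i.
Proof.
move=> ik; rewrite /vpt; case: eqP => // _.
by rewrite co_vk ?ik // (ltn_trans ik).
Qed.

Lemma char_v (k : 'I_N) y : (k <= l)%N -> Hs y ->
  (forall m, (m < N)%N -> L m (vpt xbar l k) = 0 -> L m y = 0) ->
  (forall i : 'I_N, vpt xbar l k ord0 i = 0 -> y ord0 i = 0) -> y = vpt xbar l k.
Proof.
move=> kl Hy T1 T2.
have ylo : forall i, (i < k)%N -> co y i = a i.
  suff : forall j, (j <= k)%N -> forall i, (i < j)%N -> co y i = a i.
    by move=> h i ik; apply: (h k).
  elim => [//|j IH] jk i.
  rewrite ltnS leq_eqVlt => /orP[/eqP ->|ij]; last by apply: IH => //; apply: ltnW.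
  have jN : (j < N)%N by apply: ltn_trans jk (ltn_ord k).
  have := T1 j jN; rewrite L_zero; last first.
    by move=> i' i'j; apply: vpt_lo; apply: leq_ltn_trans i'j jk.
  move=> /(_ erefl); rewrite L_prefix; last by move=> i' i'j; apply: IH => //; apply: ltnW.
  by move/eqP; rewrite subr_eq0 => /eqP.
case: (eqVneq k l) => [ekl|nkl].
  subst k; have ev : vpt xbar l l = xbar by rewrite /vpt eqxx.
  rewrite ev in T1 T2 *.
  have yl : co y l = a l.
    have := T1 l (ltn_ord l) (L_zero (fun i _ => erefl)).
    by rewrite L_prefix // => /eqP; rewrite subr_eq0 => /eqP.
  apply/rowP => i; rewrite o1.
  case: (ltngtP i l) => il.
  - by rewrite -(coE y) ylo // /a inord_val.
  - have x0 : xbar ord0 i = 0 by have := a_hi il (ltn_ord i); rewrite /a inord_val.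
    by rewrite x0; apply: T2.
  - have -> : i = l by apply: val_inj.
    by rewrite -(coE y) yl /a inord_val.
have kl' : (k < l)%N by rewrite ltn_neqAle kl andbT.
have ev : vpt xbar l k = vk k by rewrite /vpt (negbTE nkl).
rewrite ev in T1 T2 *.
have yhi : forall i : 'I_N, (k < i)%N -> y ord0 i = 0.
  move=> i ki; apply: T2; rewrite mxE ltnNge (ltnW ki) /= eq_sym (ord_ltF ki) //.
have lN := ltn_ord l.
have yhi' : forall i, (k < i)%N -> (i <= l)%N -> co y i = 0.
  by move=> i ki il; rewrite /co yhi // inordK // (leq_ltn_trans il lN).
have vhi : forall i, (k < i)%N -> (i <= l)%N -> co (vk k) i = 0.
  move=> i ki il; rewrite co_vk ?(leq_ltn_trans il lN) // ltnNge (ltnW ki) /=.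
  by rewrite eq_sym (ltn_eqF ki).
have vlo : forall i, (i < k)%N -> co (vk k) i = a i.
  by move=> i ik; rewrite co_vk ?ik // (ltn_trans ik).
have L0 : L l (vk k) = 0.
  rewrite (L_split kl' lN vlo vhi) co_vk // ltnn eqxx -(W_id kl').
  have -> : a k + 1 - a k = 1 by ring.
  by rewrite mulr1 subrr.
have := T1 l lN L0; rewrite (L_split kl' lN ylo yhi') -(W_id kl') => h.
have Wp := W_gt0 al_gt0 (ltnW kl').
have yk : co y k = a k + 1.
  have : W l k * (co y k - a k - 1) = 0 by rewrite mulrBr mulr1.
  move/eqP; rewrite mulf_eq0 (gt_eqF Wp) /= subr_eq0 subr_eq => /eqP ->.
  by rewrite addrC.
apply/rowP => i; rewrite o1 mxE.
case: (ltngtP i k) => ik.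
- by rewrite -(coE y) ylo // /a inord_val.
- by rewrite eq_sym (ord_ltF ik) yhi.
- have -> : i = k by apply: val_inj.
  by rewrite eqxx -(coE y) yk /a inord_val.
Qed.

Lemma ext_char : extreme_points Hs = [set vpt xbar l k | k in [set k : 'I_N | (k <= l)%N]].
Proof.
rewrite eqEsubset; split => x.
- move=> ex; have Hx := ex.1.
  case: (pselect (forall i, (i < l)%N -> co x i = a i)) => [hpre|hn].
    exists l; first by rewrite /= leqnn.
    rewrite /vpt eqxx.
    have Kr : Kplus (x - xbar).
      move=> i; rewrite !mxE; case: (ltngtP i l) => il.
      - by rewrite -(coE x) hpre // /a inord_val subrr.
      - have x0 : xbar ord0 i = 0 by have := a_hi il (ltn_ord i); rewrite /a inord_val.
        by rewrite x0 subr0; apply: Hx.1.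
      - have -> : i = l by apply: val_inj.
        by have := t_ge0 Hx hpre (ltn_ord l); rewrite coE /a inord_val.
    by apply/esym/(nonext ex (S_H xbar_S) Kr); rewrite addrC subrK.
  have ex0 : exists i, (i < l)%N && (co x i != a i).
    case: (pselect (exists i, (i < l)%N && (co x i != a i))) => // h; exfalso.
    apply: hn => i il; apply/eqP; case: eqP => // /eqP ne; exfalso; apply: h; exists i; by rewrite il ne.
  case: (ex_minnP ex0) => m /andP[ml ne] hmin.
  have hpre : forall i, (i < m)%N -> co x i = a i.
    move=> i im; apply/eqP; case: eqP => // /eqP ne'.
    have := hmin i; rewrite (ltn_trans im ml) ne' => /(_ erefl); rewrite leqNgt im.
    by [].
  have mN : (m < N)%N by apply: ltn_trans ml (ltn_ord l).
  pose k := Ordinal mN.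
  have hk : forall i, (i < k)%N -> co x i = a i by [].
  exists k; first by rewrite /= ltnW.
  have -> : vpt xbar l k = vk k by rewrite /vpt (ord_ltF (ml : (k < l)%N)).
  have t0 := t_ge0 Hx hk mN.
  case: (lerP 1 (co x k - a k)) => t1.
    by apply/esym/(nonext ex (S_H (vk_S k)) (up_vk Hx hk t1)); rewrite addrC subrK.
  have [z [Hz zlo e]] := decomp Hx hk t1.
  have tp : 0 < co x k - a k by rewrite lt_def t0 andbT subr_eq0.
  have := ex.2 (vk k) z _ (S_H (vk_S k)) Hz tp t1 e => ez.
  by rewrite e -ez -scalerDl addrC subrK scale1r.
- move=> [k kl <-]; split.
    rewrite /vpt; case: eqP => _; [exact: S_H xbar_S | exact: (S_H (vk_S k))].
  move=> y z t Hy Hz t0 t1 e.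
  have [T1 T2] := tight Hy Hz t0 t1 e.
  have e' : vpt xbar l k = (1 - t) *: z + (1 - (1 - t)) *: y.
    by rewrite e addrC; congr (_ + _); congr (_ *: _); ring.
  have [T1' T2'] := tight Hz Hy (ltac:(lra) : 0 < 1 - t) (ltac:(lra) : 1 - t < 1) e'.
  by rewrite (char_v kl Hy T1 T2) (char_v kl Hz T1' T2').
Qed.

End Main.


Unset Implicit Arguments.

Theorem lemma1 (R : realType) (n : nat) (hn : (1 <= n)%N) (xbar : 'rV[R]_n)
    (hK : Kplus xbar) (hZ : integral_pt xbar) :
  rec_cone (Q xbar) = Kplus (n:=n) /\ polyhedron (Q xbar) /\ full_dim (Q xbar) /\
  (xbar <> 0 -> forall l : 'I_n, is_leading_index xbar l ->
     extreme_points (Q xbar) = [set vpt xbar l k | k in [set k : 'I_n | (k <= l)%N]]).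
Proof.
case: n hn xbar hK hZ => [//|n] _ xbar hK hZ.
have QE := Q_eq hK hZ.
have Qx : Q xbar xbar by apply: conv_pt; apply: xbar_S.
split.
  rewrite eqEsubset; split => d.
    move=> hd i; rewrite leNgt; apply/negP => di.
    have dn : d ord0 i != 0 by rewrite lt_eqF.
    have t0 : 0 <= (xbar ord0 i + 1) / - d ord0 i.
      by apply: divr_ge0; [apply: addr_ge0; [apply: hK | exact: ler01] | rewrite oppr_ge0 ltW].
    have := hd _ Qx _ t0; rewrite QE => -[Kx _]; have := Kx i; rewrite !mxE.
    have -> : (xbar ord0 i + 1) / - d ord0 i * d ord0 i = - (xbar ord0 i + 1) by field.
    lra.
  move=> Kd x Qx' t t0; apply: Q_up => // i; rewrite mxE; apply: mulr_ge0 => //; exact: Kd.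
split.
  pose A (k : 'I_(n.+1 + n.+1)) : 'rV[R]_n.+1 :=
    match split k with inl i => - 'e_i | inr m => \row_j (- W xbar m j) end.
  pose B (k : 'I_(n.+1 + n.+1)) : R :=
    match split k with inl _ => 0 | inr m => - \sum_(j < n.+1) W xbar m j * xbar ord0 j end.
  exists (n.+1 + n.+1)%N, A, B; rewrite QE eqEsubset.
  have sl (i : 'I_n.+1) (x : 'rV[R]_n.+1) : \sum_j (- 'e_i : 'rV[R]_n.+1) ord0 j * x ord0 j = - x ord0 i.
    rewrite (bigD1 i) //= big1 ?addr0 => [|j ji]; rewrite !mxE ?eqxx /=.
      by rewrite mulN1r.
    by rewrite (negbTE ji) /= oppr0 mul0r.
  have sr (m : 'I_n.+1) (x : 'rV[R]_n.+1) : \sum_j (\row_j' (- W xbar m j') : 'rV[R]_n.+1) ord0 j * x ord0 j =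
      - \sum_(j < n.+1) W xbar m j * xbar ord0 j - L xbar m x.
    by rewrite L_ord // -sumrN -sumrB; apply: eq_bigr => j _; rewrite mxE; ring.
  split => x.
    move=> [Kx Lx] k; rewrite /A /B; case: (split k) => [i|m].
      by rewrite sl oppr_le0; apply: Kx.
    by rewrite sr; have := Lx m (ltn_ord m); lra.
  move=> h; split.
    move=> i; have := h (lshift n.+1 i); rewrite /A /B.
    have -> : split (lshift n.+1 i) = inl i := unsplitK (inl _ i).
    by rewrite sl oppr_le0.
  move=> m mN; have := h (rshift n.+1 (Ordinal mN)); rewrite /A /B.
  have -> : split (rshift n.+1 (Ordinal mN)) = inr (Ordinal mN) := unsplitK (inr _ _).
  rewrite sr; lra.
split.
  exists xbar, 1%:M; split => //; split; last exact: mxrank1.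
  move=> i; rewrite row1; apply: conv_pt.
  by have := S_shift 1 i (xbar_S hK hZ); rewrite scale1r.
move=> _ l hl; rewrite QE; exact: ext_char.
Qed.
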